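(* Let $G=(V,E)$ be a connected graph on $n\ge 2$ vertices with maximum degree $\Delta$. (i) $\gamma^{DLD}(G)\le n-\beta_2(G)\le \left\lfloor n\left(1-\frac{1}{\Delta^2+1}\right)\right\rfloor$. (ii) If moreover $N(u)\not\subseteq N(v)$ for all distinct $u,v\in V$, then $\gamma^{DLD}(G)\le n-\beta(G)\le \left\lfloor n\left(1-\frac{1}{\Delta+1}\right)\right\rfloor$. (iii) If moreover $N(u)\not\subseteq N[v]$ for all distinct $u,v\in V$, then $\gamma^{SLD}(G)\le n-\beta(G)\le \left\lfloor n\left(1-\frac{1}{\Delta+1}\right)\right\rfloor$.
   Context: Graphs are finite, simple and undirected. For $u\in V$, $N(u)$ is the set of neighbours of $u$ and $N[u]=N(u)\cup\{u\}$; $d(u,v)$ is the distance. A code is a non-empty subset $C\subseteq V$; $I(C;u)=N[u]\cap C$. A code $C$ is self-locating-dominating if for every $u\in V\setminus C$ we have $I(C;u)\neq\emptyset$ and $\bigcap_{c\in I(C;u)}N[c]=\{u\}$. A code $C$ is solid-locating-dominating if $I(C;u)\ne\emptyset$ for every $u\in V\setminus C$ and $I(C;u)\not\subseteq I(C;v)$ for all distinct $u,v\in V\setminus C$. $\gamma^{SLD}(G)$, $\gamma^{DLD}(G)$ are the minimum sizes of such codes. $\beta(G)$ is the independence number of $G$. $\beta_2(G)$ is the maximum size of a set $S\subseteq V$ with $d(u,v)\ge 3$ for all distinct $u,v\in S$. *)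

(* Defs.v *)
From mathcomp Require Import all_boot all_order.
Set Implicit Arguments. Unset Strict Implicit. Unset Printing Implicit Defensive.

Section Graphs.
Variables (T : finType) (e : rel T).

Definition simple_graph : Prop := symmetric e /\ irreflexive e.
Definition connected_graph : Prop := forall x y : T, connect e x y.

Definition nbh (u : T) : {set T} := [set w | e u w].
Definition cnbh (u : T) : {set T} := u |: nbh u.

Definition max_degree : nat := \max_(v : T) #|nbh v|.

Definition Iset (C : {set T}) (u : T) : {set T} := cnbh u :&: C.

Definition self_locating_dominating (C : {set T}) : bool :=
  (C != set0) &&
  [forall u, (u \notin C) ==>
     ((Iset C u != set0) && (\bigcap_(c in Iset C u) cnbh c == [set u]))].

Definition solid_locating_dominating (C : {set T}) : bool :=
  (C != set0) &&
  [forall u, (u \notin C) ==> (Iset C u != set0)] &&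
  [forall u, forall v, ((u != v) && (u \notin C) && (v \notin C)) ==>
       ~~ (Iset C u \subset Iset C v)].

(* minimum sizes (the default #|T| is never reached when n >= 1, as V
   itself is such a code) *)
Definition gamma_SLD : nat :=
  \big[minn/#|T|]_(C : {set T} | self_locating_dominating C) #|C|.
Definition gamma_DLD : nat :=
  \big[minn/#|T|]_(C : {set T} | solid_locating_dominating C) #|C|.

Definition independent (S : {set T}) : bool :=
  [forall u in S, forall v in S, ~~ e u v].

Definition dist_ge3 (u v : T) : bool :=
  (u != v) && ~~ e u v && [forall w, ~~ (e u w && e w v)].

Definition packing2 (S : {set T}) : bool :=
  [forall u in S, forall v in S, (u != v) ==> dist_ge3 u v].

Definition beta : nat := \max_(S : {set T} | independent S) #|S|.
Definition beta2 : nat := \max_(S : {set T} | packing2 S) #|S|.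

End Graphs.

(* Main.v *)
Require Import Defs.
From mathcomp Require Import all_boot all_order zify.
Set Implicit Arguments. Unset Strict Implicit. Unset Printing Implicit Defensive.

Lemma symE (T : finType) (e : rel T) : simple_graph e -> forall x y, e x y = e y x.
Proof. by case=> s _; apply: s. Qed.
Lemma irrE (T : finType) (e : rel T) : simple_graph e -> forall x, e x x = false.
Proof. by case=> _ i; apply: i. Qed.

Lemma bigmin_le_seq (I : eqType) r (P : pred I) F x j :
  j \in r -> P j -> \big[minn/x]_(i <- r | P i) F i <= F j.
Proof.
move=> + Pj; elim: r => // h t ih; rewrite inE big_cons.
move=> /predU1P[<-|jt]; first by rewrite Pj geq_minl.
by case: ifPn => Ph; [rewrite geq_min ih ?orbT | rewrite ih].
Qed.

Lemma bigmin_le (I : finType) (P : pred I) F x j :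
  P j -> \big[minn/x]_(i | P i) F i <= F j.
Proof. by apply: bigmin_le_seq; rewrite mem_index_enum. Qed.

Lemma has_nb (T : finType) (e : rel T) : connected_graph e -> 2 <= #|T| ->
  forall u, exists w, e u w.
Proof.
move=> cg n2 u.
have : 0 < #|[set~ u]| by rewrite cardsC1; lia.
case/card_gt0P => v; rewrite in_setC1 => vu.
case/connectP: (cg u v) => [[|w p]] /=; first by move=> _ vE; rewrite vE eqxx in vu.
by case/andP=> euw _ _; exists w.
Qed.

Lemma card_bigcup_le (T I : finType) (P : pred I) (F : I -> {set T}) :
  #|\bigcup_(i | P i) F i| <= \sum_(i | P i) #|F i|.
Proof.
apply: (big_ind2 (fun (X : {set T}) n => #|X| <= n)) => //; first by rewrite cards0.
by move=> A a B b HA HB; apply: leq_trans (leq_card_setU A B).1 _; apply: leq_add.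
Qed.

Lemma indep_nE (T : finType) (e : rel T) S u v :
  independent e S -> u \in S -> v \in S -> ~~ e u v.
Proof. by move=> /forallP/(_ u); rewrite /= => + uS vS; rewrite uS /= => /forallP/(_ v); rewrite vS. Qed.

Lemma Iset_compl (T : finType) (e : rel T) S u : simple_graph e ->
  independent e S -> u \in S -> Iset e (~: S) u = nbh e u.
Proof.
move=> sg iS uS; apply/setP => x; rewrite /Iset /cnbh /nbh !inE.
case: eqP => [->|_]; first by rewrite uS irrE.
case: (boolP (x \in S)) => xS /=; last by rewrite andbT.
by rewrite andbF (negbTE (indep_nE iS uS xS)).
Qed.

Lemma compl_ne0 (T : finType) (e : rel T) S : connected_graph e -> 2 <= #|T| ->
  independent e S -> ~: S != set0.
Proof.
move=> cg n2 iS; apply/set0Pn; have [u _] : exists u : T, true.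
  by have /card_gt0P[u _] : 0 < #|T| by lia; exists u.
case: (boolP (u \in S)) => uS; last by exists u; rewrite in_setC.
case: (has_nb cg n2 u) => w euw; exists w; rewrite in_setC; apply/negP => wS.
by have := indep_nE iS uS wS; rewrite euw.
Qed.

Lemma dld_compl (T : finType) (e : rel T) S : simple_graph e -> connected_graph e -> 2 <= #|T| ->
  independent e S ->
  (forall u v, u \in S -> v \in S -> u != v -> ~~ (nbh e u \subset nbh e v)) ->
  solid_locating_dominating e (~: S).
Proof.
move=> sg cg n2 iS H; rewrite /solid_locating_dominating (compl_ne0 cg n2 iS) /=.
apply/andP; split.
- apply/forallP => u; rewrite in_setC negbK; apply/implyP => uS.
  rewrite Iset_compl //; apply/set0Pn; case: (has_nb cg n2 u) => w euw; exists w.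
  by rewrite /nbh inE.
- apply/forallP => u; apply/forallP => v; apply/implyP; rewrite !in_setC !negbK.
  case/andP=> /andP[uv uS] vS; rewrite !Iset_compl //; exact: H.
Qed.

Lemma sld_compl (T : finType) (e : rel T) S : simple_graph e -> connected_graph e -> 2 <= #|T| ->
  independent e S ->
  (forall u v, u != v -> ~~ (nbh e u \subset cnbh e v)) ->
  self_locating_dominating e (~: S).
Proof.
move=> sg cg n2 iS H; rewrite /self_locating_dominating (compl_ne0 cg n2 iS) /=.
apply/forallP => u; rewrite in_setC negbK; apply/implyP => uS.
rewrite Iset_compl //; apply/andP; split.
  apply/set0Pn; case: (has_nb cg n2 u) => w euw; exists w.
  by rewrite /nbh inE.
apply/eqP/setP => x; rewrite in_set1; case: eqP => [->|nx].
  by apply/bigcapP => c; rewrite /cnbh /nbh !inE => euc; rewrite (symE sg) euc orbT.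
apply/negP => /bigcapP Hx.
have ux : u != x by apply/eqP => ux; apply: nx.
apply: (negP (H u x ux)); apply/subsetP => c cin.
have := Hx c cin; rewrite /cnbh /nbh !inE in cin * => /orP[/eqP ->|exc].
  by rewrite eqxx.
by rewrite (symE sg) exc orbT.
Qed.

Lemma dist3_sym (T : finType) (e : rel T) u v : simple_graph e ->
  dist_ge3 e u v = dist_ge3 e v u.
Proof.
move=> sg; rewrite /dist_ge3 eq_sym (symE sg u v); congr (_ && _).
apply/forallP/forallP => H w; have := H w; by rewrite (symE sg u w) (symE sg w v) andbC.
Qed.

Lemma pack_d3 (T : finType) (e : rel T) S u v :
  packing2 e S -> u \in S -> v \in S -> u != v -> dist_ge3 e u v.
Proof.
move=> /forallP/(_ u) + uS vS uv; rewrite uS /= => /forallP/(_ v).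
by rewrite vS uv.
Qed.

Lemma pack_indep (T : finType) (e : rel T) S : simple_graph e ->
  packing2 e S -> independent e S.
Proof.
move=> sg pS; apply/forallP => u; apply/implyP => uS; apply/forallP => v; apply/implyP => vS.
case: (eqVneq u v) => [->|uv]; first by rewrite irrE.
by case/andP: (pack_d3 pS uS vS uv) => /andP[].
Qed.

Lemma pack_disj (T : finType) (e : rel T) S : simple_graph e -> connected_graph e -> 2 <= #|T| ->
  packing2 e S ->
  (forall u v, u \in S -> v \in S -> u != v -> ~~ (nbh e u \subset nbh e v)).
Proof.
move=> sg cg n2 pS u v uS vS uv; apply/negP => /subsetP sub.
case: (has_nb cg n2 u) => w euw.
have : w \in nbh e v by apply: sub; rewrite /nbh inE.
rewrite /nbh inE => evw.
case/andP: (pack_d3 pS uS vS uv) => _ /forallP/(_ w).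
by rewrite euw (symE sg) evw.
Qed.

Lemma deg_le (T : finType) (e : rel T) v : #|nbh e v| <= max_degree e.
Proof. exact: leq_bigmax. Qed.

Lemma indep_dom (T : finType) (e : rel T) S : simple_graph e ->
  independent e S -> (forall S', independent e S' -> #|S'| <= #|S|) ->
  #|T| <= #|S| * (max_degree e + 1).
Proof.
move=> sg iS mx.
have cover : forall v, v \in \bigcup_(s in S) cnbh e s.
  move=> v; apply/negPn/negP => /negP nv.
  have vS : v \notin S.
    by apply/negP => vS; apply: nv; apply/bigcupP; exists v => //; rewrite /cnbh !inE eqxx.
  have nadj : forall s, s \in S -> ~~ e s v.
    move=> s sS; apply/negP => esv; apply: nv; apply/bigcupP; exists s => //.
    by rewrite /cnbh /nbh !inE esv orbT.
  have iS' : independent e (v |: S).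
    apply/forallP => a; apply/implyP; rewrite in_setU1 => /orP[/eqP->|aS];
    apply/forallP => b; apply/implyP; rewrite in_setU1 => /orP[/eqP->|bS].
    - by rewrite irrE.
    - by rewrite (symE sg) nadj.
    - by rewrite nadj.
    - exact: indep_nE iS aS bS.
  by have := mx _ iS'; rewrite cardsU1 vS add1n ltnn.
rewrite -cardsT; apply: leq_trans (subset_leq_card (_ : [set: T] \subset \bigcup_(s in S) cnbh e s)) _.
  by apply/subsetP => v _; apply: cover.
apply: leq_trans (card_bigcup_le _ _) _; rewrite -sum_nat_const; apply: leq_sum => s _.
rewrite /cnbh cardsU1 addnC leq_add ?deg_le //; exact: leq_b1.
Qed.

Definition B2 (T : finType) (e : rel T) s : {set T} :=
  s |: \bigcup_(w in nbh e s) (w |: (nbh e w :\ s)).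

Lemma B2_card (T : finType) (e : rel T) s : simple_graph e ->
  #|B2 e s| <= (max_degree e) ^ 2 + 1.
Proof.
move=> sg; rewrite /B2 cardsU1 addnC leq_add ?leq_b1 //.
apply: leq_trans (card_bigcup_le _ _) _.
apply: leq_trans (_ : \sum_(w in nbh e s) max_degree e <= _).
  apply: leq_sum => w ws.
  have h1 := cardsU1 w (nbh e w :\ s); have h2 := cardsD1 s (nbh e w).
  have sw : s \in nbh e w by rewrite /nbh inE (symE sg); rewrite /nbh inE in ws.
  rewrite sw in h2; have h3 := leq_b1 (w \notin nbh e w :\ s); have h4 := deg_le e w.
  lia.
rewrite sum_nat_const expnS expn1 leq_mul2r deg_le orbT //.
Qed.

Lemma pack_dom (T : finType) (e : rel T) S : simple_graph e ->
  packing2 e S -> (forall S', packing2 e S' -> #|S'| <= #|S|) ->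
  #|T| <= #|S| * ((max_degree e) ^ 2 + 1).
Proof.
move=> sg pS mx.
have cover : forall v, v \in \bigcup_(s in S) B2 e s.
  move=> v; apply/negPn/negP => /negP nv.
  have nB : forall s, s \in S -> v \notin B2 e s.
    by move=> s sS; apply/negP => vB; apply: nv; apply/bigcupP; exists s.
  have vS : v \notin S.
    by apply/negP => vS; have := nB v vS; rewrite /B2 setU11.
  have d3 : forall s, s \in S -> dist_ge3 e s v.
    move=> s sS; have := nB s sS; rewrite /B2 in_setU1 negb_or => /andP[vs nbig].
    have H : forall w, e s w -> v \notin w |: (nbh e w :\ s).
      move=> w esw; apply/negP => vin; move/negP: nbig; apply; apply/bigcupP; exists w => //.
      by rewrite /nbh inE.
    rewrite /dist_ge3 eq_sym vs /=; apply/andP; split.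
      by apply/negP => esv; have := H v esv; rewrite setU11.
    apply/forallP => w; apply/negP => /andP[esw ewv].
    by have := H w esw; rewrite !inE vs ewv orbT.
  have pS' : packing2 e (v |: S).
    apply/forallP => a; apply/implyP; rewrite in_setU1 => /orP[/eqP->|aS];
    apply/forallP => b; apply/implyP; rewrite in_setU1 => /orP[/eqP->|bS]; apply/implyP => ab.
    - by rewrite eqxx in ab.
    - by rewrite dist3_sym // d3.
    - exact: d3.
    - exact: pack_d3 pS aS bS ab.
  by have := mx _ pS'; rewrite cardsU1 vS add1n ltnn.
rewrite -cardsT; apply: leq_trans (subset_leq_card (_ : [set: T] \subset \bigcup_(s in S) B2 e s)) _.
  by apply/subsetP => v _; apply: cover.
apply: leq_trans (card_bigcup_le _ _) _; rewrite -sum_nat_const; apply: leq_sum => s _.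
exact: B2_card.
Qed.

Theorem mainTheorem8 (T : finType) (e : rel T) :
  simple_graph e -> connected_graph e -> 2 <= #|T| ->
  let n := #|T| in
  let D := max_degree e in
  [/\ gamma_DLD e <= n - beta2 e /\ n - beta2 e <= (n * D ^ 2) %/ (D ^ 2 + 1),
      (forall u v : T, u != v -> ~~ (nbh e u \subset nbh e v)) ->
        gamma_DLD e <= n - beta e /\ n - beta e <= (n * D) %/ (D + 1)
    & (forall u v : T, u != v -> ~~ (nbh e u \subset cnbh e v)) ->
        gamma_SLD e <= n - beta e /\ n - beta e <= (n * D) %/ (D + 1)].
Proof.
move=> sg cg n2; cbv zeta.
have i0 : independent e set0 by apply/forallP => u; rewrite inE.
have p0 : packing2 e set0 by apply/forallP => u; rewrite inE.
have [S iS [bE mx]] : exists2 S, independent e S &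
    beta e = #|S| /\ forall S', independent e S' -> #|S'| <= #|S|.
  rewrite /beta (bigmax_eq_arg set0) //; case: arg_maxnP => // S0 iS0 mx0.
  by exists S0.
have [P pP [b2E mx2]] : exists2 S, packing2 e S &
    beta2 e = #|S| /\ forall S', packing2 e S' -> #|S'| <= #|S|.
  rewrite /beta2 (bigmax_eq_arg set0) //; case: arg_maxnP => // S0 iS0 mx0.
  by exists S0.
have cS := cardsC S; have cP := cardsC P.
have hS := indep_dom sg iS mx; have hP := pack_dom sg pP mx2.
set D := max_degree e in hS hP *.
have bndS : #|T| - #|S| <= (#|T| * D) %/ (D + 1).
  rewrite leq_divRL ?addn1 //; rewrite addn1 in hS; nia.
split.
- split.
    rewrite b2E; apply: leq_trans (bigmin_le _ _ (dld_compl sg cg n2 (pack_indep sg pP) (pack_disj sg cg n2 pP))) _.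
    lia.
  rewrite b2E leq_divRL ?addn1 //; rewrite addn1 in hP.
  move: hP; set X := D ^ 2; nia.
- move=> H; split; last by rewrite bE.
  rewrite bE; apply: leq_trans (bigmin_le _ _ (dld_compl sg cg n2 iS (fun u v _ _ uv => H u v uv))) _.
  lia.
- move=> H; split; last by rewrite bE.
  rewrite bE; apply: leq_trans (bigmin_le _ _ (sld_compl sg cg n2 iS H)) _.
  lia.
Qed.
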